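(* Let $n\ge0$, $H\ge0$ and $0\le i\le n$ be integers, and put $R_4(\varepsilon)=\binom{n+i+\varepsilon}{n}\binom{2n-i-\varepsilon}{n}$. Then $\tilde\Phi_n^{-1}d_n^{H}\frac1{H!}\frac{\partial^H}{\partial\varepsilon^H}R_4(\varepsilon)\big|_{\varepsilon=0}$ is an integer, where $\tilde\Phi_n=\prod_{p\text{ prime},\ p<n,\ \{n/p\}\in[2/3,1)}p$.
   Context: For complex $x$ and integer $m\ge0$, $\binom xm=x(x-1)\cdots(x-m+1)/m!$. $d_n=\operatorname{lcm}(1,\dots,n)$, $d_0=1$; $\{x\}$ is the fractional part of $x$; an empty product equals $1$. *)

(* Defs.v *)
From HB Require Import structures.
From mathcomp Require Import all_boot all_order all_algebra.
Set Implicit Arguments. Unset Strict Implicit. Unset Printing Implicit Defensive.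
Import Order.TTheory GRing.Theory Num.Theory.
Local Open Scope ring_scope.

Definition binpoly (x : {poly rat}) (m : nat) : {poly rat} :=
  (\prod_(j < m) (x - (j%:R)%:P)) * ((m`!%:R)^-1)%:P.

Definition R4 (n i : nat) : {poly rat} :=
  binpoly (((n + i)%N%:R)%:P + 'X) n * binpoly (((2 * n - i)%N%:R)%:P - 'X) n.

Definition dlcm (n : nat) : nat := \big[lcmn/1%N]_(1 <= k < n.+1) k.

Definition fracq (x : rat) : rat := x - (Num.floor x)%:~R.

Definition PhiT (n : nat) : nat :=
  \prod_(p < n | prime p && ((2%:R / 3%:R <= fracq (n%:R / p%:R)) && (fracq (n%:R / p%:R) < 1)))
    p.

(* Main.v *)
Require Import Defs.
From HB Require Import structures.
From mathcomp Require Import all_boot all_order all_algebra.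
From mathcomp Require Import zify ring.
Import Order.TTheory GRing.Theory Num.Theory.

Lemma logn_prod (I : Type) (r : seq I) (P : pred I) (F : I -> nat) p :
  (forall i, P i -> 0 < F i) ->
  logn p (\prod_(i <- r | P i) F i) = \sum_(i <- r | P i) logn p (F i).
Proof.
move=> Fpos.
have: (0 < \prod_(i <- r | P i) F i) /\ logn p (\prod_(i <- r | P i) F i) = \sum_(i <- r | P i) logn p (F i).
  apply: (big_rec2 (fun x y => 0 < x /\ logn p x = y)); first by rewrite logn1.
  move=> i x y Pi [xpos <-]; split; first by rewrite muln_gt0 Fpos.
  by rewrite lognM // Fpos.
by case.
Qed.


Lemma count_dvd d a m : 0 < d ->
  \sum_(j < m) (d %| a + m - j) = (a + m) %/ d - a %/ d.
Proof.
move=> d0; elim: m => [|m IH]; first by rewrite big_ord0 addn0 subnn.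
rewrite big_ord_recl /=.
have -> : \sum_(j < m) (d %| a + m.+1 - bump 0 j) = \sum_(j < m) (d %| a + m - j).
  by apply: eq_bigr => j _; rewrite /bump /= add1n addnS subSS.
rewrite IH subn0 addnS divnS //.
have : a %/ d <= (a + m) %/ d by apply: leq_div2r; rewrite leq_addr.
lia.
Qed.


Lemma sum_le_min (P : pred nat) m N : (forall k, P k -> k <= m) ->
  \sum_(1 <= k < N.+1) P k <= minn N m.
Proof.
move=> HP; elim: N => [|N IH]; first by rewrite big_geq.
rewrite big_nat_recr //=.
case: (boolP (P N.+1)) => [/HP h|_] /=; lia.
Qed.


Lemma gcd_bound p n c D : prime p -> 0 < c -> 0 < D ->
  (forall k, 0 < k -> p ^ k <= n -> p ^ k %| D) ->
  \sum_(1 <= k < n.+1) ((p ^ k <= n) && (p ^ k %| c)) <= logn p (gcdn c D).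
Proof.
move=> pp c0 D0 HD.
apply: leq_trans (geq_minr n _); apply: sum_le_min.
move=> k /andP [kn kc].
rewrite -pfactor_dvdn ?gcdn_gt0 ?c0 //.
case: k kn kc => [|k] kn kc; first by rewrite expn0 dvd1n.
by rewrite dvdn_gcd kc HD.
Qed.


Lemma G_bound p n a D : prime p -> 0 < D ->
  (forall k, 0 < k -> p ^ k <= n -> p ^ k %| D) ->
  \sum_(1 <= k < n.+1) (p ^ k <= n) * ((a + n) %/ p ^ k - a %/ p ^ k)
  <= logn p (\prod_(j < n) gcdn (a + n - j) D).
Proof.
move=> pp D0 HD.
rewrite logn_prod; last by move=> j _; rewrite gcdn_gt0 D0 orbT.
have -> : \sum_(1 <= k < n.+1) (p ^ k <= n) * ((a + n) %/ p ^ k - a %/ p ^ k)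
  = \sum_(1 <= k < n.+1) \sum_(j < n) ((p ^ k <= n) && (p ^ k %| a + n - j)).
  apply: eq_bigr => k _; rewrite -count_dvd ?expn_gt0 ?prime_gt0 // big_distrr /=.
  by apply: eq_bigr => j _; rewrite mulnb.
rewrite exchange_big /=; apply: leq_sum => j _.
apply: gcd_bound => //. have := ltn_ord j. lia.
Qed.


Lemma legendre2 p n : prime p ->
  logn p n`! = \sum_(1 <= k < n.+1) (p ^ k <= n) * (n %/ p ^ k).
Proof.
move=> pp; rewrite logn_fact //; apply: eq_bigr => k _.
case: (leqP (p ^ k) n) => h; first by rewrite mul1n.
by rewrite mul0n divn_small.
Qed.


Lemma carry p n i : 0 < p -> 2 * p <= 3 * (n %% p) -> i <= n ->
  (n %/ p) + (n %/ p) + 1 <= ((i + n) %/ p - i %/ p) + ((n - i + n) %/ p - (n - i) %/ p).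
Proof.
move=> p0 hx hi.
have hn : n - i + i = n by rewrite subnK.
have hm : ((n - i) %% p + i %% p) %% p = n %% p by rewrite modnDm hn.
rewrite (divnD i n p0) (divnD (n - i) n p0).
have x1 := ltn_pmod n p0. have x2 := ltn_pmod i p0. have x3 := ltn_pmod (n - i) p0.
move: hx hm x1 x2 x3.
move: (n %% p) (i %% p) ((n - i) %% p) (n %/ p) (i %/ p) ((n - i) %/ p) => x y z a b c hx hm x1 x2 x3.
have hz : (z + y = x) \/ (z + y = x + p).
  case: (ltnP (z + y) p) => h.
    by left; rewrite -hm modn_small.
  right; have e : (z + y) %% p = z + y - p.
    rewrite -{1}(subnK h) modnDr modn_small //.
    rewrite ltn_subLR //; lia.
  rewrite hm in e; lia.
move: (leq y p) => _.
case: hz => hz; case: (leqP p (x + y)) => h1; case: (leqP p (x + z)) => h2 /=; lia.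
Qed.

Section RS.
Local Open Scope ring_scope.

Lemma fracq_nat n q : (0 < q)%N -> Defs.fracq (n%:R / q%:R) = (n %% q)%:R / q%:R.
Proof.
move=> q0.
have qn0 : (q%:R : rat) != 0 by rewrite pnatr_eq0 -lt0n.
have e : (n%:R / q%:R : rat) = (n %/ q)%:R + (n %% q)%:R / q%:R.
  by rewrite {1}(divn_eq n q) natrD natrM mulrDl mulfK.
rewrite /Defs.fracq (@floor_def _ _ (n %/ q)%:Z); first by rewrite e pmulrn addrAC subrr add0r.
rewrite e pmulrn lerDl divr_ge0 ?ler0n //=.
rewrite intrD pmulrn ltrD2l ltr_pdivrMr ?ltr0n // mul1r ltr_nat ltn_pmod //.
Qed.

Lemma phit_cond n q : prime q ->
  ((2%:R / 3%:R <= Defs.fracq (n%:R / q%:R) :> rat) && (Defs.fracq (n%:R / q%:R) < 1)) ->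
  (2 * q <= 3 * (n %% q))%N.
Proof.
move=> qp /andP [h _]; move: h; rewrite fracq_nat ?prime_gt0 //.
rewrite ler_pdivrMr ?ltr0n ?prime_gt0 // mulrAC ler_pdivlMr ?ltr0n ?prime_gt0 //.
by rewrite -!natrM ler_nat mulnC [(3 * _)%N]mulnC.
Qed.

Lemma dlcm_gt0 n : (0 < dlcm n)%N.
Proof.
rewrite /dlcm.
have : forall k, k \in index_iota 1 n.+1 -> (0 < k)%N by move=> k; rewrite mem_index_iota => /andP [].
elim: (index_iota 1 n.+1) => [|a r IH] h; first by rewrite big_nil.
rewrite big_cons lcmn_gt0 h ?inE ?eqxx // IH // => k hk; apply: h; by rewrite inE hk orbT.
Qed.

Lemma dvd_dlcm n m : (0 < m)%N -> (m <= n)%N -> (m %| dlcm n)%N.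
Proof.
move=> m0 mn; rewrite /dlcm.
have : m \in index_iota 1 n.+1 by rewrite mem_index_iota m0 ltnS.
elim: (index_iota 1 n.+1) => [|a r IH] //; rewrite inE big_cons => /orP [/eqP -> | /IH h].
  exact: dvdn_lcml.
exact: dvdn_trans h (dvdn_lcmr _ _).
Qed.

Lemma PhiT_gt0 n : (0 < PhiT n)%N.
Proof.
rewrite /PhiT; elim/big_ind: _ => //; first by move=> x y hx hy; rewrite muln_gt0 hx.
by move=> q /andP [qp _]; exact: prime_gt0.
Qed.

Lemma logn_PhiT p n : prime p ->
  (logn p (PhiT n) <= ((p < n) && (2 * p <= 3 * (n %% p))))%N.
Proof.
move=> pp; rewrite /PhiT logn_prod; last by move=> q /andP [qp _]; exact: prime_gt0.
case: (boolP ((p < n) && (2 * p <= 3 * (n %% p)))%N) => hc.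
  case/andP: hc => pn _.
  rewrite big_mkcond /=.
  apply: (@leq_trans (\sum_(q < n) (q == Ordinal pn : nat))).
    apply: leq_sum => q _; case: ifP => // /andP [qp _].
    rewrite logn_prime //; case: (p =P q) => [e|_] //.
    suff -> : q == Ordinal pn by [].
    by apply/eqP/val_inj => /=; rewrite -e.
  by rewrite (bigD1 (Ordinal pn)) //= eqxx big1 // => q /negbTE ->.
rewrite leqn0 sum_nat_eq0; apply/forallP => q; apply/implyP => /andP [qp hq].
rewrite logn_prime //; case: (p =P q) => // e; case/negP: hc.
by rewrite e ltn_ord (@phit_cond n q qp hq).
Qed.


End RS.
Lemma NTarith p n i : prime p -> (i <= n)%N ->
  (\sum_(1 <= k < n.+1) (p ^ k <= n) * (n %/ p ^ k) + \sum_(1 <= k < n.+1) (p ^ k <= n) * (n %/ p ^ k)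
   + logn p (PhiT n) <=
   \sum_(1 <= k < n.+1) (p ^ k <= n) * ((i + n) %/ p ^ k - i %/ p ^ k) +
   \sum_(1 <= k < n.+1) (p ^ k <= n) * ((n - i + n) %/ p ^ k - (n - i) %/ p ^ k))%N.
Proof.
move=> pp hi.
have L := @logn_PhiT p n pp.
rewrite -!big_split /=.
case: (boolP ((p < n) && (2 * p <= 3 * (n %% p)))%N) => hc; last rewrite (negbTE hc) in L.
  rewrite hc in L.
  case/andP: hc => pn hc.
  have C := @carry p n i (prime_gt0 pp) hc hi.
  have n1 : (1 < n.+1)%N by rewrite ltnS (leq_ltn_trans (leq0n p) pn).
  rewrite (big_ltn n1) (big_ltn n1) expn1 (ltnW pn) /= !mul1n -addnA [X in (_ + X <= _)%N]addnC addnA.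
  apply: leq_add; first by apply: leq_trans C; rewrite leq_add2l.
  apply: leq_sum => k _; apply: leq_add; by rewrite leq_mul2l divnD ?expn_gt0 ?prime_gt0 // -addnA addKn leq_addr orbT.
have L0 : logn p (PhiT n) = 0 by apply/eqP; rewrite -leqn0; exact: L.
rewrite L0 addn0.
apply: leq_sum => k _; apply: leq_add; by rewrite leq_mul2l divnD ?expn_gt0 ?prime_gt0 // -addnA addKn leq_addr orbT.
Qed.

Lemma NTmain n i : (i <= n)%N ->
  (n`! * n`! * PhiT n %|
   (\prod_(j < n) gcdn (i + n - j) (dlcm n)) * (\prod_(j < n) gcdn (n - i + n - j) (dlcm n)))%N.
Proof.
move=> hi.
have D0 := dlcm_gt0 n.
have G0 : forall a, (0 < \prod_(j < n) gcdn (a + n - j) (dlcm n))%N.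
  by move=> a; rewrite prodn_gt0 // => j; rewrite gcdn_gt0 D0 orbT.
apply/dvdn_partP; first by rewrite !muln_gt0 fact_gt0 PhiT_gt0.
move=> p; rewrite mem_primes => /and3P [pp _ _].
rewrite p_part pfactor_dvdn ?muln_gt0 ?G0 //.
rewrite !lognM ?muln_gt0 ?fact_gt0 ?PhiT_gt0 ?G0 //.
have HDp : forall k, (0 < k)%N -> (p ^ k <= n)%N -> (p ^ k %| dlcm n)%N.
  by move=> k k0 kn; apply: dvd_dlcm => //; rewrite expn_gt0 prime_gt0.
have B1 := @G_bound p n i (dlcm n) pp D0 HDp.
have B2 := @G_bound p n (n - i) (dlcm n) pp D0 HDp.
rewrite legendre2 //.
apply: leq_trans (leq_add B1 B2).
exact: NTarith.
Qed.

Local Open Scope ring_scope.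

Lemma coef_comp_scale (R : comNzRingType) (p : {poly R}) (c : R) k :
  (p \Po (c *: 'X))`_k = c ^+ k * p`_k.
Proof.
rewrite coef_comp_poly.
under eq_bigr => j _ do rewrite exprZn coefZ coefXn.
case: (ltnP k (size p)) => hk.
  rewrite (bigD1 (Ordinal hk)) //= eqxx mulr1 big1 ?addr0; first by rewrite mulrC.
  move=> j hj; have -> : (k == j) = false.
    by apply/negbTE; apply: contra hj => /eqP e; apply/eqP/val_inj; rewrite /= e.
  by rewrite !mulr0.
rewrite nth_default // mulr0 big1 // => j _.
have : (j < k)%N by apply: leq_trans (ltn_ord j) hk.
by rewrite ltn_neqAle eq_sym => /andP [/negbTE -> _]; rewrite mulr0 mulr0.
Qed.

Lemma comp_prod (R : comNzRingType) m (F : 'I_m -> {poly R}) q :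
  (\prod_(j < m) F j) \Po q = \prod_(j < m) (F j \Po q).
Proof.
elim/big_rec2: _ => [|j x y _ <-]; first by rewrite -polyC1 comp_polyC.
by rewrite comp_polyM.
Qed.

Lemma R4_comp n i (hi : (i <= n)%N) (q : {poly rat}) :
  R4 n i \Po q = (\prod_(j < n) (((i + n - j)%N%:R)%:P + q)) *
                 (\prod_(j < n) (((n - i + n - j)%N%:R)%:P - q)) * ((n`!%:R ^+ 2)^-1)%:P.
Proof.
rewrite /R4 /binpoly !comp_polyM !comp_polyC !comp_prod.
have -> : \prod_(j < n) ((((n + i)%N%:R)%:P + 'X - (j%:R)%:P) \Po q)
        = \prod_(j < n) (((i + n - j)%N%:R)%:P + q).
  apply: eq_bigr => j _; rewrite comp_polyB comp_polyD !comp_polyC comp_polyX.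
  rewrite addrAC -polyCB -natrB; last by apply: leq_trans (ltnW (ltn_ord j)) _; rewrite leq_addr.
  by rewrite addnC.
have -> : \prod_(j < n) ((((2 * n - i)%N%:R)%:P - 'X - (j%:R)%:P) \Po q)
        = \prod_(j < n) (((n - i + n - j)%N%:R)%:P - q).
  apply: eq_bigr => j _; rewrite comp_polyB comp_polyB !comp_polyC comp_polyX.
  rewrite addrAC -polyCB -natrB; last first.
    have := ltn_ord j; rewrite mul2n -addnn; move: hi; clear; lia.
  congr (_%:P - q); congr (_%:R); move: hi (ltn_ord j); clear; lia.
by rewrite mulrACA -polyCM -invfM -expr2.
Qed.

Definition Zp n i : {poly int} :=
  (\prod_(j < n) (((i + n - j)%N%:Z)%:P + (dlcm n)%:Z *: 'X)) *
  (\prod_(j < n) (((n - i + n - j)%N%:Z)%:P - (dlcm n)%:Z *: 'X)).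

Lemma mapL1 (k D : nat) :
  map_poly (intr : int -> rat) ((k%:Z)%:P + D%:Z *: 'X) = (k%:R)%:P + D%:R *: 'X.
Proof. by rewrite rmorphD /= map_polyC map_polyZ map_polyX /= !pmulrn. Qed.

Lemma mapL2 (k D : nat) :
  map_poly (intr : int -> rat) ((k%:Z)%:P - D%:Z *: 'X) = (k%:R)%:P - D%:R *: 'X.
Proof. by rewrite rmorphB /= map_polyC map_polyZ map_polyX /= !pmulrn. Qed.

Lemma Zp_coef n i H (hi : (i <= n)%N) :
  ((Zp n i)`_H)%:~R = (dlcm n)%:R ^+ H * (R4 n i)`_H * (n`!%:R ^+ 2) :> rat.
Proof.
have := @coef_comp_scale _ (R4 n i) ((dlcm n)%:R) H.
rewrite R4_comp // coefMC => <-.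
rewrite -mulrA mulVf ?mulr1; last by rewrite expf_neq0 // pnatr_eq0 -lt0n fact_gt0.
rewrite -coef_map_id0 // /Zp rmorphM !rmorph_prod /=.
under eq_bigr => j _ do rewrite mapL1.
rewrite (eq_bigr _ (fun j _ => mapL2 _ _)).
by [].
Qed.

Lemma zcontents_prod m (F : 'I_m -> {poly int}) :
  zcontents (\prod_(j < m) F j) = \prod_(j < m) zcontents (F j).
Proof.
elim/big_rec2: _ => [|j x y _ <-]; first exact: zcontents_monic (monic1 _).
by rewrite zcontentsM.
Qed.

Lemma dvdz_prod_nat m (F : 'I_m -> nat) (G : 'I_m -> int) :
  (forall j, ((F j)%:Z %| G j)%Z) -> (((\prod_(j < m) F j)%N)%:Z %| \prod_(j < m) G j)%Z.
Proof.
move=> h; elim/big_rec2: _ => [|j x y _ hxy] //.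
by rewrite PoszM; apply: dvdz_mul.
Qed.

Lemma lin_content (c D : nat) (b : bool) :
  ((gcdn c D)%:Z %| zcontents ((c%:Z)%:P + (-1) ^+ b * D%:Z *: 'X))%Z.
Proof.
rewrite dvdz_contents; apply/polyOverP => k.
rewrite coefD coefC coefZ coefX.
case: k => [|[|k]] /=.
- rewrite mulr0 addr0; rewrite dvdzE /=; exact: dvdn_gcdl.
- rewrite add0r mulr1 dvdzE abszM /= abszX /= exp1n mul1n; exact: dvdn_gcdr.
- by rewrite add0r mulr0 dvdz0.
Qed.

Lemma Zp_dvd n i (hi : (i <= n)%N) :
  (((n`! * n`! * PhiT n)%N)%:Z %| zcontents (Zp n i))%Z.
Proof.
apply: dvdz_trans (_ : (((\prod_(j < n) gcdn (i + n - j) (dlcm n)) *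
   (\prod_(j < n) gcdn (n - i + n - j) (dlcm n)))%N%:Z %| _)%Z).
  by rewrite dvdzE /=; exact: NTmain.
rewrite /Zp zcontentsM !zcontents_prod PoszM; apply: dvdz_mul; apply: dvdz_prod_nat => j.
  by have := lin_content (i + n - j) (dlcm n) false; rewrite expr0 mul1r.
have := lin_content (n - i + n - j) (dlcm n) true.
by rewrite expr1 mulN1r scaleNr.
Qed.

Theorem mainTheorem18 (n H i : nat) (hi : (i <= n)%N) :
  exists z : int,
    ((PhiT n)%:R)^-1 * ((dlcm n)%:R ^+ H) * ((H`!%:R)^-1 * ((R4 n i)^`(H)).[0])
    = z%:~R :> rat.
Proof.
have hd := @Zp_dvd n i hi; rewrite dvdz_contents in hd.
move/polyOverP: hd => /(_ H) /dvdzP [z hz].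
exists z.
rewrite horner_coef0 coef_derivn addn0 ffactnn -[(R4 n i)`_H *+ _]mulr_natr.
rewrite [_^-1 * (_ * _)]mulrCA mulVf ?mulr1; last first.
  by rewrite pnatr_eq0 -lt0n fact_gt0.
have nf : (n`!%:R : rat) ^+ 2 != 0 by rewrite expf_neq0 // pnatr_eq0 -lt0n fact_gt0.
have pf : ((PhiT n)%:R : rat) != 0 by rewrite pnatr_eq0 -lt0n PhiT_gt0.
have e : (dlcm n)%:R ^+ H * (R4 n i)`_H = z%:~R * (PhiT n)%:R :> rat.
  apply: (mulIf nf); rewrite -Zp_coef // hz intrM. rewrite -pmulrn !natrM; ring.
by rewrite -mulrA e mulrCA mulVf ?mulr1.
Qed.
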